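(* Let $m,n\ge1$ be natural numbers. For $j=1,2$ let $\mathcal U_j$ be a non-principal ultrafilter on $\mathbb N$ and $(a^{(j)}_i,b^{(j)}_i)_{i\in\mathbb N}$ coprime natural numbers with $2\le a^{(j)}_i<b^{(j)}_i$ such that $S^{(j)}=\prod_{\mathcal U_j}\{xa^{(j)}_i+yb^{(j)}_i\}$ is a limit 2-semigroup with generators $a^{(j)},b^{(j)}$ in which $m\,b^{(j)}=\beta_n$, and such that the residue $\mathrm{res}_m(a^{(j)})$ of $a^{(j)}$ modulo $m$ is coprime to $m$. Suppose that $S^{(1)}$ and $S^{(2)}$ have the same residues of $a$ modulo every $N\ge1$, the same value of $q_0=r(a,b)$, and, in case $q_0=0$, the same $M_a$-residues of $\alpha(b)$ modulo every $N\ge1$. Then $S^{(1)}$ and $S^{(2)}$ have the same invariants, namely: the same residues of $b$ modulo every $N$; the same $M_b$-residues of $\beta_1$, the same $M_a$-residues of $\alpha_1$ and of $\alpha(b)$ modulo every $N$; and for all $p,q\in\mathbb N$ the same truth values of the statements $p\,a<q\,b$, of $p\,b<q\,\alpha(b)+q\,a$, and of $p\,\beta_1<q\,ab$. Furthermore, in any such limit 2-semigroup, $q_0=0$ or $q_0=m/k$ for some positive integer $k$.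
   Context: A standard 2-semigroup with coprime generators $2\le a<b$ is $\{xa+yb:x,y\in\mathbb N\}$ with $+,<,0$. A limit 2-semigroup is an ultraproduct $\prod_{\mathcal U}S_i$ of standard 2-semigroups $S_i$ (generators $a_i<b_i$) over a non-principal ultrafilter, not isomorphic to a standard semigroup, with generators $a=[(a_i)]$, $b=[(b_i)]$; it is assumed that $a$ exceeds every finite multiple of the minimal positive distance between elements. All the following notions are defined in each $S_i$ and interpreted coordinatewise in the ultraproduct. $ab$ is the product; $\alpha(b)=\lfloor b/a\rfloor a$; for $1\le n<b$, $\beta_n$ is the least multiple of $b$ that is $\equiv n\pmod a$ (i.e. $kb$ with $0\le k<a$, $kb\equiv n$), and $\alpha_n=\beta_n-n$; $p\,x$ denotes $x$ added to itself $p$ times. The residue of $x$ modulo $N$ is the $r<N$ with $x\equiv r\pmod N$ (in the ultraproduct: holding for $\mathcal U$-almost all coordinates). For a multiple $x=ta\le ab$ of $a$, its $M_a$-residue modulo $N$ is $t \bmod N$; for a multiple $x=tb\le ab$ of $b$, its $M_b$-residue modulo $N$ is $t\bmod N$. The ratio $q_0=r(a,b)=\sup\{p/q: p,q\in\mathbb Z_{\ge0}, q\neq0,\ p\,b\le q\,a\}$. *)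

(* Defs.v *)
From mathcomp Require Import all_boot all_order all_algebra.
From mathcomp Require Import boolp classical_sets reals.
Set Implicit Arguments. Unset Strict Implicit. Unset Printing Implicit Defensive.
Import Order.TTheory GRing.Theory Num.Theory.

Local Open Scope classical_set_scope.

Definition nonprincipal_ultrafilter (U : set (set nat)) : Prop :=
  U setT /\ ~ U set0 /\
  (forall A B, U A -> U B -> U (A `&` B)) /\
  (forall A B, A `<=` B -> U A -> U B) /\
  (forall A, U A \/ U (~` A)) /\
  (forall k : nat, ~ U [set k]).

(** A first-order property of the ultraproduct that is evaluated
    coordinatewise holds iff it holds for U-almost all coordinates. *)
Definition uholds (U : set (set nat)) (P : nat -> Prop) : Prop := U [set i | P i].

Definition std2 (a b : nat) : Prop := [/\ (2 <= a)%N, (a < b)%N & coprime a b].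

Definition inS (a b x : nat) : Prop := exists u v : nat, x = (u * a + v * b)%N.

(** Limit 2-semigroup data: prod_U {x a_i + y b_i}, where a exceeds every finite
    multiple of the minimal positive distance between elements (i.e. for every
    standard k, k * (minimal positive distance) < a). *)
Definition limit2sg (U : set (set nat)) (a b : nat -> nat) : Prop :=
  [/\ nonprincipal_ultrafilter U,
      (forall i, std2 (a i) (b i))
    & (forall k : nat, uholds U (fun i => exists x y,
          [/\ inS (a i) (b i) x, inS (a i) (b i) y, (x < y)%N
            & (k * (y - x) < a i)%N]))].

(** beta_n = k b with k the least natural number (necessarily < a) such that
    k b = n (mod a); [betak] is this k. *)
Definition betak (a b n : nat) : nat :=
  find (fun k => k * b %% a == n %% a) (iota 0 a).
Definition beta (a b n : nat) : nat := (betak a b n * b)%N.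
Definition alpha (a b n : nat) : nat := (beta a b n - n)%N.
Definition alphab (a b : nat) : nat := (b %/ a * a)%N.

Definition ures (U : set (set nat)) (x : nat -> nat) (N r : nat) : Prop :=
  (r < N)%N /\ uholds U (fun i => x i %% N = r).

(** M_a-residue of a multiple x = t a (<= ab): the t-sequence is given;
    M_a-coefficients used below: alpha(b) = (b %/ a) a, alpha_1 = ((beta_1 - 1) %/ a) a.
    M_b-coefficient of beta_1 = k b is k = betak a b 1. *)
Definition Ma_alphab (a b : nat -> nat) : nat -> nat := fun i => (b i %/ a i)%N.
Definition Ma_alpha1 (a b : nat -> nat) : nat -> nat :=
  fun i => (alpha (a i) (b i) 1 %/ a i)%N.
Definition Mb_beta1 (a b : nat -> nat) : nat -> nat := fun i => betak (a i) (b i) 1.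

Definition q0 (R : realType) (U : set (set nat)) (a b : nat -> nat) : R :=
  sup [set x : R | exists p q : nat, [/\ (0 < q)%N,
        x = (p%:R / q%:R)%R & uholds U (fun i => (p * b i <= q * a i)%N)]].

Definition prop53_hyp (m n : nat) (U : set (set nat)) (a b : nat -> nat) : Prop :=
  [/\ limit2sg U a b,
      uholds U (fun i => (m * b i)%N = beta (a i) (b i) n)
    & exists r, ures U a m r /\ coprime r m].

Definition same_res (U1 : set (set nat)) (x1 : nat -> nat)
                    (U2 : set (set nat)) (x2 : nat -> nat) : Prop :=
  forall N r : nat, (0 < N)%N -> (ures U1 x1 N r <-> ures U2 x2 N r).

Definition same_invariants (U1 : set (set nat)) (a1 b1 : nat -> nat)
                           (U2 : set (set nat)) (a2 b2 : nat -> nat) : Prop :=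
  same_res U1 b1 U2 b2 /\
  same_res U1 (Mb_beta1 a1 b1) U2 (Mb_beta1 a2 b2) /\
  same_res U1 (Ma_alpha1 a1 b1) U2 (Ma_alpha1 a2 b2) /\
  same_res U1 (Ma_alphab a1 b1) U2 (Ma_alphab a2 b2) /\
  [/\ (forall p q : nat, uholds U1 (fun i => (p * a1 i < q * b1 i)%N)
                     <-> uholds U2 (fun i => (p * a2 i < q * b2 i)%N)),
      (forall p q : nat,
          uholds U1 (fun i => (p * b1 i < q * alphab (a1 i) (b1 i) + q * a1 i)%N)
      <-> uholds U2 (fun i => (p * b2 i < q * alphab (a2 i) (b2 i) + q * a2 i)%N))
    & (forall p q : nat,
          uholds U1 (fun i => (p * beta (a1 i) (b1 i) 1 < q * (a1 i * b1 i))%N)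
      <-> uholds U2 (fun i => (p * beta (a2 i) (b2 i) 1 < q * (a2 i * b2 i))%N))].

(* Main.v *)
Require Import Defs.
From mathcomp Require Import all_boot all_order all_algebra.
From mathcomp Require Import boolp classical_sets reals.
From mathcomp Require Import zify ring lra.
Import Order.TTheory GRing.Theory Num.Theory.
Set Implicit Arguments. Unset Strict Implicit.

Lemma betak_lt a b n : (exists k, k < a /\ k * b %% a = n %% a) -> betak a b n < a.
Proof.
move=> [k [ka kP]].
have hs : has (fun k => k * b %% a == n %% a) (iota 0 a).
  apply/hasP; exists k; last by apply/eqP.
  by rewrite mem_iota.
by have := hs; rewrite has_find size_iota.
Qed.

Lemma betak_spec a b n : betak a b n < a -> betak a b n * b %% a = n %% a.
Proof.
move=> lt.
have hs : has (fun k => k * b %% a == n %% a) (iota 0 a).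
  by rewrite has_find size_iota.
have := nth_find 0 hs; rewrite nth_iota // add0n => /eqP.
by rewrite /betak.
Qed.

Lemma inv_exists a b : 2 <= a -> coprime a b -> exists k, k < a /\ k * b %% a = 1 %% a.
Proof.
move=> a2 cab.
have [x xa] := Bezoutr b (ltnW a2).
rewrite gcdnC (eqP cab) => dv.
have x0 : 0 < x.
  case: x xa dv => // _; rewrite mul0n addn0 dvdn1 => /eqP a1; lia.
exists (a - x); split; first lia.
have e : (a - x) * b + (1 + x * b) = a * b + 1.
  rewrite mulnBl. have : x * b <= a * b by rewrite leq_mul2r ltnW ?orbT.
  lia.
apply/eqP; rewrite -(eqn_modDr (1 + x * b)) e.
by apply/eqP; rewrite -[in RHS]modnDmr (eqP dv) addn0 -modnDml ?modnMl ?modnMr add0n.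
Qed.

Definition tf m a b := m * b %/ a.
Definition kf a b := betak a b 1.
Definition sf a b := kf a b * b %/ a.
Definition uf n a b := kf a b * n %/ a.

Lemma coordL (m n a b : nat) : 0 < m -> 0 < n -> m < a -> n < a -> std2 a b ->
  m * b = beta a b n ->
  [/\ m * b = tf m a b * a + n, kf a b * b = sf a b * a + 1, kf a b < a,
      kf a b * n = uf n a b * a + m & uf n a b < n /\
      sf a b * m = uf n a b + tf m a b * kf a b].
Proof.
move=> m0 n0 ma na [a2 ab cab] hb.
have b0 : 0 < b by lia.
have bm : betak a b n = m.
  by apply/eqP; rewrite -(eqn_pmul2r b0) hb.
have mbmod : m * b %% a = n.
  by rewrite -bm betak_spec ?bm // modn_small.
have e1 : m * b = tf m a b * a + n by rewrite {1}(divn_eq (m * b) a) mbmod.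
have kl : kf a b < a by apply: betak_lt; apply: inv_exists.
have kmod : kf a b * b %% a = 1 by rewrite betak_spec // modn_small.
have e2 : kf a b * b = sf a b * a + 1 by rewrite {1}(divn_eq (kf a b * b) a) kmod.
set t := tf m a b in e1 *; set k := kf a b in kl kmod e2 *; set s := sf a b in e2 *.
have e3 : k * n = uf n a b * a + k * n %% a by rewrite {1}(divn_eq (k * n) a).
set u := uf n a b in e3 *.
have rl : k * n %% a < a by rewrite ltn_mod; lia.
set r := k * n %% a in e3 rl *.
have E : (k * t + u) * a + r = (m * s) * a + m.
  have : k * (m * b) = m * (k * b) by lia.
  rewrite e1 e2. nia.
have rm : r = m.
  have := congr1 (fun x => x %% a) E; rewrite /= !modnMDl !modn_small //.
rewrite rm in E e3.
have E2 : k * t + u = m * s.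
  apply/eqP; rewrite -(eqn_pmul2r (ltnW a2)); apply/eqP; lia.
split=> //; split; [nia | lia].
Qed.

Lemma modinj a b x y : 0 < a -> coprime a b -> x < a -> y < a -> x * b %% a = y * b %% a -> x = y.
Proof.
move=> a0 cab.
wlog xy : x y / x <= y.
  move=> H xa ya e; case: (leqP x y) => h; first exact: H.
  by symmetry; apply: H => //; lia.
move=> xa ya /eqP e.
have : a %| (y - x) * b.
  rewrite mulnBl -eqn_mod_dvd ?leq_mul2r ?xy ?orbT //. by rewrite eq_sym.
rewrite Gauss_dvdl // => d.
case: (posnP (y - x)) => h; first lia.
have := dvdn_leq h d; lia.
Qed.

Lemma coord_uniq (m n a b u' : nat) : 0 < m -> 0 < n -> m < a -> n < a -> std2 a b ->
  m * b = beta a b n -> u' < n -> n %| m + a * u' ->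
  m %| u' + tf m a b * ((m + a * u') %/ n) -> u' = uf n a b.
Proof.
move=> m0 n0 ma na sab hb un d1 d2.
have [e1 e2 kl e3 [ul e4]] := coordL m0 n0 ma na sab hb.
case: sab => a2 ab cab.
set K := (m + a * u') %/ n in d2.
have eK : K * n = m + a * u' by rewrite divnK.
set S := (u' + tf m a b * K) %/ m.
have eS : S * m = u' + tf m a b * K by rewrite divnK.
have Kl : K < a.
  have h1 : a * u' + a <= a * n by rewrite addnC -mulnS leq_mul2l un orbT.
  rewrite ltnNge; apply/negP => h.
  have : a * n <= K * n by rewrite leq_mul2r h orbT.
  lia.
have eKb : K * b = S * a + 1.
  apply/eqP; rewrite -(eqn_pmul2l m0); apply/eqP.
  have -> : m * (K * b) = K * (m * b) by lia.
  rewrite e1 mulnDr eK.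
  have h : m * (S * a + 1) = (u' + tf m a b * K) * a + m by rewrite -eS; lia.
  rewrite h; lia.
have KK : K = kf a b.
  apply: (modinj (a := a) (b := b)) => //; first lia.
  by rewrite eKb e2 !modnMDl.
rewrite KK in eK.
have : a * u' = a * uf n a b by lia.
by move/eqP; rewrite eqn_pmul2l; [move/eqP | lia].
Qed.

Lemma ba_t (m n a b : nat) : 0 < m -> 0 < n -> m < a -> n < a -> std2 a b ->
  m * b = beta a b n -> b %/ a = tf m a b %/ m.
Proof.
move=> m0 n0 ma na sab hb.
have [e1 _ _ _ _] := coordL m0 n0 ma na sab hb.
rewrite -(divnMl m0) e1.
rewrite {1}(divn_eq (tf m a b) m).
have rl : tf m a b %% m < m by rewrite ltn_mod.
move: (tf m a b %/ m) (tf m a b %% m) rl => q r rl.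
have -> : (q * m + r) * a + n = (r * a + n) + q * (m * a) by lia.
rewrite divnDMl; last by rewrite muln_gt0 m0 /=; lia.
rewrite divn_small ?add0n //.
have : r.+1 * a <= m * a by rewrite leq_mul2r rl orbT.
lia.
Qed.

Section UF.
Variable U : set (set nat).
Hypothesis HU : nonprincipal_ultrafilter U.

Lemma uf_mono (P Q : nat -> Prop) : (forall i, P i -> Q i) -> uholds U P -> uholds U Q.
Proof. case: HU => [_ [_ [_ [hm _]]]] h; apply: hm => i /=; exact: h. Qed.

Lemma uf_ext (P Q : nat -> Prop) : (forall i, P i <-> Q i) -> uholds U P <-> uholds U Q.
Proof. by move=> h; split; apply: uf_mono => i /h. Qed.

Lemma uf_T (P : nat -> Prop) : (forall i, P i) -> uholds U P.
Proof. move=> h; case: HU => [hT _]; apply: uf_mono hT => i _; exact: h. Qed.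

Lemma uf_and (P Q : nat -> Prop) : uholds U P -> uholds U Q -> uholds U (fun i => P i /\ Q i).
Proof. case: HU => [_ [_ [hI _]]] hP hQ; exact: (hI _ _ hP hQ). Qed.

Lemma uf_ex (P : nat -> Prop) : uholds U P -> exists i, P i.
Proof.
move=> h; apply: contrapT => hn; case: HU => [_ [h0 _]]; apply: h0.
by apply: uf_mono h => i Pi; apply: hn; exists i.
Qed.

Lemma uf_mp (P Q : nat -> Prop) : uholds U P -> uholds U (fun i => P i -> Q i) -> uholds U Q.
Proof. move=> h1 h2; apply: uf_mono (uf_and h1 h2) => i [? h]; exact: h. Qed.

Lemma uf_em (P : nat -> Prop) : uholds U P \/ uholds U (fun i => ~ P i).
Proof. by case: HU => [_ [_ [_ [_ [hc _]]]]]; case: (hc P); [left|right]. Qed.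

Lemma uf_not (P : nat -> Prop) : uholds U (fun i => ~ P i) <-> ~ uholds U P.
Proof.
split.
  move=> h1 h2; have [i []] := uf_ex (uf_and h1 h2); by [].
by case: (uf_em P).
Qed.

Lemma uf_lim (f : nat -> nat) K : uholds U (fun i => f i < K) ->
  exists v, v < K /\ uholds U (fun i => f i = v).
Proof.
elim: K => [|K IH] h.
  by have [i] := uf_ex h.
case: (uf_em (fun i => f i = K)) => hK; first by exists K.
have [v [vK hv]] : exists v, v < K /\ uholds U (fun i => f i = v).
  apply: IH; apply: uf_mono (uf_and h hK) => i [h1 h2]; lia.
by exists v; split => //; lia.
Qed.

Lemma uf_val (f : nat -> nat) v (Q : nat -> Prop) : uholds U (fun i => f i = v) ->
  (uholds U (fun i => Q (f i)) <-> Q v).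
Proof.
move=> hv; split.
  by move=> hQ; have [i [-> ]] := uf_ex (uf_and hv hQ).
by move=> qv; apply: uf_mono hv => i ->.
Qed.

Lemma uf_val2 (f g : nat -> nat) v w (Q : nat -> nat -> Prop) :
  uholds U (fun i => f i = v) -> uholds U (fun i => g i = w) ->
  (uholds U (fun i => Q (f i) (g i)) <-> Q v w).
Proof.
move=> hv hw; split.
  by move=> hQ; have [i [[-> ->]]] := uf_ex (uf_and (uf_and hv hw) hQ).
by move=> qv; apply: uf_mono (uf_and hv hw) => i [-> ->].
Qed.

Lemma uf_dich (f : nat -> nat) :
  (exists k, uholds U (fun i => f i = k)) \/ (forall K, uholds U (fun i => K < f i)).
Proof.
case: (pselect (exists k, uholds U (fun i => f i = k))) => hk; [by left | right].
have H : forall K, uholds U (fun i => K <= f i).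
  elim=> [|K IH]; first by apply: uf_T.
  have hn : uholds U (fun i => ~ f i = K).
    case: (uf_em (fun i => f i = K)) => // h; by case: hk; exists K.
  by apply: uf_mono (uf_and IH hn) => i [h1 h2]; lia.
by move=> K; apply: H.
Qed.

End UF.

Section SR.
Variables (U1 U2 : set (set nat)).
Hypothesis (HU1 : nonprincipal_ultrafilter U1) (HU2 : nonprincipal_ultrafilter U2).

Lemma SR_fwd f1 f2 N r : same_res U1 f1 U2 f2 -> 0 < N ->
  uholds U1 (fun i => f1 i %% N = r) -> uholds U2 (fun i => f2 i %% N = r).
Proof.
move=> h N0 h1.
have rN : r < N.
  have [i <-] := uf_ex HU1 h1; by rewrite ltn_mod.
by have [] := (h N r N0).1.
Qed.

Lemma SR_sym f1 f2 : same_res U1 f1 U2 f2 -> same_res U2 f2 U1 f1.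
Proof. by move=> h N r N0; split => /(h N r N0). Qed.

Lemma SR_val f1 f2 v : uholds U1 (fun i => f1 i = v) -> uholds U2 (fun i => f2 i = v) ->
  same_res U1 f1 U2 f2.
Proof.
move=> h1 h2 N r N0; rewrite /ures.
rewrite (uf_val HU1 (fun x => x %% N = r) h1) (uf_val HU2 (fun x => x %% N = r) h2).
by [].
Qed.

Lemma SR_pred f1 f2 g1 g2 N : same_res U1 f1 U2 f2 -> same_res U1 g1 U2 g2 -> 0 < N ->
  forall Q : nat -> nat -> Prop,
  uholds U1 (fun i => Q (f1 i %% N) (g1 i %% N)) <-> uholds U2 (fun i => Q (f2 i %% N) (g2 i %% N)).
Proof.
move=> hf hg N0 Q.
have [x [_ hx]] := uf_lim HU1 (uf_T HU1 (P := fun i => f1 i %% N < N) (fun i => ltn_pmod (f1 i) N0)).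
have [y [_ hy]] := uf_lim HU1 (uf_T HU1 (P := fun i => g1 i %% N < N) (fun i => ltn_pmod (g1 i) N0)).
have hx2 := SR_fwd hf N0 hx; have hy2 := SR_fwd hg N0 hy.
by rewrite (uf_val2 HU1 Q hx hy) (uf_val2 HU2 Q hx2 hy2).
Qed.

Lemma SR_ae f1 f2 g1 g2 : uholds U1 (fun i => f1 i = g1 i) -> uholds U2 (fun i => f2 i = g2 i) ->
  same_res U1 f1 U2 f2 -> same_res U1 g1 U2 g2.
Proof.
move=> e1 e2 h N r N0; rewrite /ures.
have E1 : uholds U1 (fun i => f1 i %% N = r) <-> uholds U1 (fun i => g1 i %% N = r).
  by split=> h'; move: (uf_and HU1 e1 h'); apply: (uf_mono HU1) => i [e]; rewrite e.
have E2 : uholds U2 (fun i => f2 i %% N = r) <-> uholds U2 (fun i => g2 i %% N = r).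
  by split=> h'; move: (uf_and HU2 e2 h'); apply: (uf_mono HU2) => i [e]; rewrite e.
rewrite -E1 -E2; exact: h.
Qed.

Lemma SR_const c : same_res U1 (fun _ => c) U2 (fun _ => c).
Proof. by apply: (SR_val (v := c)); apply: uf_T. Qed.

Lemma SR_binop f1 f2 g1 g2 (op : nat -> nat -> nat) :
  (forall x y N, 0 < N -> op x y %% N = op (x %% N) (y %% N) %% N) ->
  same_res U1 f1 U2 f2 -> same_res U1 g1 U2 g2 ->
  same_res U1 (fun i => op (f1 i) (g1 i)) U2 (fun i => op (f2 i) (g2 i)).
Proof.
move=> hop hf hg N r N0; rewrite /ures.
have := SR_pred hf hg N0 (fun x y => op x y %% N = r).
rewrite (uf_ext HU1 (Q := fun i => op (f1 i) (g1 i) %% N = r)); last by move=> i; rewrite -hop.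
rewrite (uf_ext HU2 (Q := fun i => op (f2 i) (g2 i) %% N = r)); last by move=> i; rewrite -hop.
by move=> ->.
Qed.

Lemma SR_add f1 f2 g1 g2 : same_res U1 f1 U2 f2 -> same_res U1 g1 U2 g2 ->
  same_res U1 (fun i => f1 i + g1 i) U2 (fun i => f2 i + g2 i).
Proof. by apply: SR_binop => x y N _; rewrite modnDm. Qed.

Lemma SR_mul f1 f2 g1 g2 : same_res U1 f1 U2 f2 -> same_res U1 g1 U2 g2 ->
  same_res U1 (fun i => f1 i * g1 i) U2 (fun i => f2 i * g2 i).
Proof. by apply: SR_binop => x y N _; rewrite modnMm. Qed.

Lemma SR_div f1 f2 d : 0 < d -> same_res U1 f1 U2 f2 ->
  same_res U1 (fun i => f1 i %/ d) U2 (fun i => f2 i %/ d).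
Proof.
move=> d0 hf N r N0; rewrite /ures.
have N0' : 0 < N * d by rewrite muln_gt0 N0.
have := SR_pred hf hf N0' (fun x _ => x %/ d = r).
rewrite (uf_ext HU1 (Q := fun i => f1 i %/ d %% N = r)); last by move=> i; rewrite modn_divl.
rewrite (uf_ext HU2 (Q := fun i => f2 i %/ d %% N = r)); last by move=> i; rewrite modn_divl.
by move=> ->.
Qed.

End SR.

Definition good m n (a b : nat) :=
  [/\ m < a, n < a, std2 a b & m * b = beta a b n].

Lemma hyp_large m n U a b : prop53_hyp m n U a b -> forall K, uholds U (fun i => K < a i).
Proof.
case=> [[HU sab big] _ _] K.
apply: (uf_mono HU) (big K) => i [x [y [_ _ xy h]]].
have : K <= K * (y - x) by rewrite leq_pmulr // subn_gt0.
lia.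
Qed.

Lemma hyp_good m n U a b : prop53_hyp m n U a b -> uholds U (fun i => good m n (a i) (b i)).
Proof.
move=> h; have hl := hyp_large h.
case: h => [[HU sab big] hb _].
have := uf_and HU (uf_and HU (hl m) (hl n)) hb.
by apply: (uf_mono HU) => i [[h1 h2] h3]; split.
Qed.

Section Q0.
Variable R : realType.

Lemma natdiv_le (p q m k : nat) : 0 < q -> 0 < k -> p * k <= m * q ->
  (p%:R / q%:R <= m%:R / k%:R :> R)%R.
Proof.
move=> q0 k0 h.
rewrite ler_pdivrMr ?ltr0n // mulrAC ler_pdivlMr ?ltr0n //.
by rewrite -!natrM ler_nat.
Qed.

End Q0.

Lemma good_coord m n a b : 0 < m -> 0 < n -> good m n a b ->
  [/\ m * b = tf m a b * a + n, 1 < a, a < b & n < a].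
Proof.
move=> m0 n0 [ma na sab hb].
have [e1 _ _ _ _] := coordL m0 n0 ma na sab hb.
by case: sab => a2 ab _; split.
Qed.

Section Q0b.
Variable R : realType.
Local Open Scope ring_scope.

Lemma archi (x : R) : 0 <= x -> exists N : nat, x < N%:R.
Proof. by move=> h; exists (Num.bound x); apply: archi_boundP. Qed.

Lemma xN_eq (m k N : nat) : (0 < k)%N -> (0 < N)%N -> (0 < m)%N ->
  (m%:R / k%:R : R) = ((m * N - 1)%N%:R / (k * N)%N%:R) + 1 / (k%:R * N%:R).
Proof.
move=> k0 N0 m0.
have h1 : (1 <= m * N)%N by rewrite muln_gt0 m0.
rewrite natrB // !natrM.
have hk : (k%:R : R) != 0 by rewrite pnatr_eq0 -lt0n.
have hN : (N%:R : R) != 0 by rewrite pnatr_eq0 -lt0n.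
by field; rewrite hk hN.
Qed.

End Q0b.

Section Classify.
Variable R : realType.
Local Open Scope ring_scope.

Lemma classify m n U a b : (0 < m)%N -> (0 < n)%N -> prop53_hyp m n U a b ->
  (exists k, (0 < k)%N /\ uholds U (fun i => tf m (a i) (b i) = k) /\
      q0 R U a b = m%:R / k%:R)
  \/ ((forall K, uholds U (fun i => K < tf m (a i) (b i))%N) /\ q0 R U a b = 0).
Proof.
move=> m0 n0 h.
have G := hyp_good h; have L := hyp_large h.
have HU : nonprincipal_ultrafilter U by case: h => [[]].
have E0 : (fun x : R => exists p q : nat, [/\ (0 < q)%N,
        x = (p%:R / q%:R)%R & uholds U (fun i => (p * b i <= q * a i)%N)]) 0.
  exists 0%N, 1%N; split => //; first by rewrite mul0r.
  by apply: (uf_T HU) => i; rewrite mul0n.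
case: (uf_dich HU (fun i => tf m (a i) (b i))) => [[k hk] | hinf].
- left.
  have k0 : (0 < k)%N.
    have [i [gi ti]] := uf_ex HU (uf_and HU G hk).
    have [e1 a1 ab na] := good_coord m0 n0 gi.
    have : (b i <= m * b i)%N by rewrite leq_pmull.
    rewrite ti in e1; case: k ti e1 {hk} => // ti e1; lia.
  exists k; split => //; split => //.
  have ub : ubound (fun x : R => exists p q : nat, [/\ (0 < q)%N,
        x = (p%:R / q%:R)%R & uholds U (fun i => (p * b i <= q * a i)%N)]) (m%:R / k%:R).
    move=> x [p [q [q0 -> hpq]]].
    apply: natdiv_le => //.
    have [i [[gi ti] hi]] := uf_ex HU (uf_and HU (uf_and HU G hk) hpq).
    have [e1 a1 ab na] := good_coord m0 n0 gi.
    rewrite ti in e1.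
    have h1 : (p * k * a i <= m * q * a i)%N.
      have : (p * (m * b i) <= m * (q * a i))%N.
        have -> : (p * (m * b i) = m * (p * b i))%N by lia.
        by rewrite leq_mul2l hi orbT.
      rewrite e1; lia.
    by move: h1; rewrite leq_pmul2r //; lia.
  apply/le_anti/andP; split; first by apply: ge_sup => //; exists 0.
  apply/ler_addgt0Pr => e e0.
  have kpos : 0 < k%:R :> R by rewrite ltr0n.
  have iv : 0 < (k%:R * e)^-1 by rewrite invr_gt0 mulr_gt0.
  have [N hN] := archi (ltW iv).
  have N0 : (0 < N)%N.
    case: N hN => // hN; have := lt_trans iv hN; by rewrite ltxx.
  have inE : (fun x : R => exists p q : nat, [/\ (0 < q)%N,
        x = (p%:R / q%:R)%R & uholds U (fun i => (p * b i <= q * a i)%N)])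
        ((m * N - 1)%N%:R / (k * N)%N%:R).
    exists (m * N - 1)%N, (k * N)%N; split => //; first by rewrite muln_gt0 k0.
    apply: (uf_mono HU) (uf_and HU (uf_and HU G hk) (L (N * n)%N)) => i [[gi ti] hi].
    have [e1 a1 ab na] := good_coord m0 n0 gi.
    rewrite ti in e1.
    have h2 : (N * (m * b i) = N * (k * a i + n))%N by rewrite e1.
    rewrite mulnBl mul1n; lia.
  have hs : (m * N - 1)%N%:R / (k * N)%N%:R <= sup (fun x : R => exists p q : nat, [/\ (0 < q)%N,
        x = (p%:R / q%:R)%R & uholds U (fun i => (p * b i <= q * a i)%N)]).
    apply: ub_le_sup => //; by exists (m%:R / k%:R).
  rewrite /q0 (xN_eq R k0 N0 m0).
  apply: lerD => //.
  have kN : 0 < k%:R * N%:R :> R by rewrite mulr_gt0 ?ltr0n.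
  rewrite ler_pdivrMr //.
  move: hN; rewrite -[(k%:R * e)^-1]div1r ltr_pdivrMr ?mulr_gt0 ?ltr0n // => hN.
  apply: ltW; move: hN; congr (_ < _); ring.
- right; split => //.
  rewrite /q0.
  have -> : (fun x : R => exists p q : nat, [/\ (0 < q)%N,
        x = (p%:R / q%:R)%R & uholds U (fun i => (p * b i <= q * a i)%N)]) = [set (0:R)]%classic.
    apply/seteqP; split => x; last by move=> ->.
    move=> [p [q [q0 -> hpq]]].
    have [i [[gi ti] hi]] := uf_ex HU (uf_and HU (uf_and HU G (hinf (q * m)%N)) hpq).
    have [e1 a1 ab na] := good_coord m0 n0 gi.
    case: p hi hpq => [|p] hi hpq; first by rewrite mul0r.
    exfalso.
    have h1 : (m * b i <= m * (p.+1 * b i))%N by rewrite leq_mul2l leq_pmull ?orbT.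
    have h2 : (m * (p.+1 * b i) <= m * (q * a i))%N by rewrite leq_mul2l hi orbT.
    have h3 : (q * m * a i < tf m (a i) (b i) * a i)%N by rewrite ltn_pmul2r //; lia.
    lia.
  exact: sup1.
Qed.

End Classify.

Lemma O5A m n k a b p q : 0 < m -> 0 < n -> m * b = k * a + n -> q * n < a ->
  (p * a < q * b) <-> (0 < q /\ m * p <= q * k).
Proof.
move=> m0 n0 e qa.
have E : (p * a < q * b) = (m * p * a < q * (k * a + n)).
  by rewrite -e -[in LHS](ltn_pmul2l m0); congr (_ < _); lia.
rewrite E; split.
- move=> h; split; first by case: q h {E qa} => //; rewrite mul0n ltn0.
  rewrite leqNgt; apply/negP => h2.
  have : (q * k).+1 * a <= m * p * a by rewrite leq_mul2r h2 orbT.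
  lia.
- case=> q0 h.
  have : m * p * a <= q * k * a by rewrite leq_mul2r h orbT.
  have : 0 < q * n by rewrite muln_gt0 q0.
  lia.
Qed.

Lemma O5B m n t a b p q : 0 < m -> m * b = t * a + n -> m * p < t -> 0 < a ->
  (p * a < q * b) <-> (0 < q).
Proof.
move=> m0 e tp a0.
have E : (p * a < q * b) = (m * p * a < q * (t * a + n)).
  by rewrite -e -[in LHS](ltn_pmul2l m0); congr (_ < _); lia.
rewrite E; split.
- by case: q {E} => //; rewrite mul0n ltn0.
- move=> q0.
  have : m * p * a < t * a by rewrite ltn_pmul2r.
  have : t * a <= q * (t * a) by rewrite leq_pmull.
  lia.
Qed.

Lemma O6A m n k a b p q : 0 < m -> 0 < n -> m * b = k * a + n -> p * n < a -> b %/ a = k %/ m ->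
  (p * b < q * (b %/ a * a) + q * a) <-> (p * k < m * q * (k %/ m + 1)).
Proof.
move=> m0 n0 e pa ba.
rewrite ba.
have E : (p * b < q * (k %/ m * a) + q * a) = (p * (k * a + n) < m * q * (k %/ m + 1) * a).
  by rewrite -e -[in LHS](ltn_pmul2l m0); congr (_ < _); lia.
rewrite E.
move: (k %/ m) => d.
split.
- move=> h; rewrite ltnNge; apply/negP => h2.
  have : m * q * (d + 1) * a <= p * k * a by rewrite leq_mul2r h2 orbT.
  lia.
- move=> h.
  have : (p * k).+1 * a <= m * q * (d + 1) * a by rewrite leq_mul2r h orbT.
  lia.
Qed.

Lemma O6B m n t a b p q : 0 < m -> m * b = t * a + n -> n < a -> q * m < t ->
  b %/ a = t %/ m ->
  (p * b < q * (b %/ a * a) + q * a) <-> (0 < q /\ p <= q).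
Proof.
move=> m0 e na tq ba.
rewrite ba.
have E : (p * b < q * (t %/ m * a) + q * a) = (p * (t * a + n) < m * q * (t %/ m + 1) * a).
  by rewrite -e -[in LHS](ltn_pmul2l m0); congr (_ < _); lia.
rewrite E.
have td := divn_eq t m; have tm : t %% m < m by rewrite ltn_mod.
move: (t %/ m) (t %% m) td tm => d r td tm.
have a0 : 0 < a by lia.
split.
- move=> h.
  have q0 : 0 < q.
    by case: q h {E tq} => //; rewrite !muln0 mul0n ltn0.
  split => //; rewrite leqNgt; apply/negP => h2.
  have h3 : (q + 1) * t <= p * t by rewrite leq_mul2r addn1 h2 orbT.
  have h4 : m * q * (d + 1) <= (q + 1) * t.
    have : q * m + q * (d * m) <= q * t + t by nia.
    lia.
  have : m * q * (d + 1) * a <= p * t * a by rewrite leq_mul2r (leq_trans h4 h3) orbT.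
  lia.
- case=> q0 pq.
  have h1 : p * (t * a + n) <= q * (t * a + n) by rewrite leq_mul2r pq orbT.
  have h2 : t * a + n < (t + 1) * a by lia.
  have h3 : (t + 1) <= m * (d + 1) by lia.
  have h4 : q * (t * a + n) < q * ((t + 1) * a) by rewrite ltn_pmul2l.
  have h5 : q * ((t + 1) * a) <= q * (m * (d + 1) * a).
    by rewrite leq_mul2l leq_mul2r h3 !orbT.
  lia.
Qed.

Lemma O7 k n u a b m p q : 0 < n -> 0 < b -> k * n = u * a + m -> p * m < a ->
  (p * (k * b) < q * (a * b)) <-> (p * u < q * n).
Proof.
move=> n0 b0 e pa.
rewrite !mulnA ltn_pmul2r // -(ltn_pmul2r n0) -mulnA e.
split.
- move=> h; rewrite ltnNge; apply/negP => h2.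
  have : q * n * a <= p * u * a by rewrite leq_mul2r h2 orbT.
  lia.
- move=> h.
  have : (p * u).+1 * a <= q * n * a by rewrite leq_mul2r h orbT.
  lia.
Qed.

Lemma uf_aeq U (P Q : nat -> Prop) : nonprincipal_ultrafilter U ->
  uholds U (fun i => P i <-> Q i) -> (uholds U P <-> uholds U Q).
Proof.
move=> HU h; split => h'.
  by apply: (uf_mono HU) (uf_and HU h h') => i [e]; rewrite e.
by apply: (uf_mono HU) (uf_and HU h h') => i [e]; rewrite e.
Qed.

Lemma uf_const U (c : Prop) : nonprincipal_ultrafilter U -> (uholds U (fun _ => c) <-> c).
Proof.
move=> HU; split; first by move=> h; have [] := uf_ex HU h.
by move=> hc; apply: (uf_T HU).
Qed.

Lemma hyp_HU m n U a b : prop53_hyp m n U a b -> nonprincipal_ultrafilter U.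
Proof. by case=> [[]]. Qed.

Lemma ae_facts m n U a b : 0 < m -> 0 < n -> prop53_hyp m n U a b ->
  [/\ uholds U (fun i => b i = (tf m (a i) (b i) * a i + n) %/ m),
      uholds U (fun i => Ma_alphab a b i = tf m (a i) (b i) %/ m),
      uholds U (fun i => Mb_beta1 a b i = (uf n (a i) (b i) * a i + m) %/ n),
      uholds U (fun i => Ma_alpha1 a b i = (uf n (a i) (b i) + tf m (a i) (b i) * kf (a i) (b i)) %/ m)
    & uholds U (fun i => uf n (a i) (b i) < n)].
Proof.
move=> m0 n0 h.
have HU := hyp_HU h; have G := hyp_good h.
split; apply: (uf_mono HU) G => i [ma na sab hb];
  have [e1 e2 kl e3 [ul e4]] := coordL m0 n0 ma na sab hb.
- by rewrite -e1 mulKn.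
- by rewrite /Ma_alphab (ba_t m0 n0 ma na sab hb).
- by rewrite /Mb_beta1 -e3 mulnK.
- rewrite /Ma_alpha1 -e4 mulnK // /alpha /beta.
  rewrite -/(kf (a i) (b i)) e2 addnK mulnK //; lia.
- exact: ul.
Qed.

Section Part2.
Variables (m n : nat) (U1 U2 : set (set nat)) (a1 b1 a2 b2 : nat -> nat).
Hypotheses (m0 : 0 < m) (n0 : 0 < n).
Hypotheses (h1 : prop53_hyp m n U1 a1 b1) (h2 : prop53_hyp m n U2 a2 b2).
Hypothesis SRa : same_res U1 a1 U2 a2.
Hypothesis SRt : same_res U1 (fun i => tf m (a1 i) (b1 i)) U2 (fun i => tf m (a2 i) (b2 i)).

Let HU1 := hyp_HU h1.
Let HU2 := hyp_HU h2.

Lemma SR_u_val : exists v, uholds U1 (fun i => uf n (a1 i) (b1 i) = v) /\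
                           uholds U2 (fun i => uf n (a2 i) (b2 i) = v).
Proof.
have [_ _ _ _ ul1] := ae_facts m0 n0 h1.
have [v [vn hv]] := uf_lim HU1 ul1.
exists v; split => //.
pose g1 i := m + a1 i * v; pose g2 i := m + a2 i * v.
have SRg : same_res U1 g1 U2 g2 by apply: (SR_add HU1 HU2); [apply: (SR_const HU1 HU2) | apply: (SR_mul HU1 HU2) => //; apply: (SR_const HU1 HU2)].
pose k1 i := v + tf m (a1 i) (b1 i) * (g1 i %/ n).
pose k2 i := v + tf m (a2 i) (b2 i) * (g2 i %/ n).
have SRk : same_res U1 k1 U2 k2.
  by apply: (SR_add HU1 HU2); [apply: (SR_const HU1 HU2) | apply: (SR_mul HU1 HU2) => //; apply: (SR_div HU1 HU2)].
have G1 := hyp_good h1.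
have A1 : uholds U1 (fun i => g1 i %% n = 0 /\ k1 i %% m = 0).
  apply: (uf_mono HU1) (uf_and HU1 G1 hv) => i [[ma na sab hb] ui].
  have [e1 e2 kl e3 [ul e4]] := coordL m0 n0 ma na sab hb.
  have eg : g1 i = kf (a1 i) (b1 i) * n by rewrite /g1 e3 ui; lia.
  rewrite /k1 eg mulnK // -ui -e4 modnMl; split => //.
  by rewrite modnMl.
have B1 := SR_fwd HU1 SRg n0 (uf_mono HU1 (fun i (h : _ /\ _) => h.1) A1).
have B2 := SR_fwd HU1 SRk m0 (uf_mono HU1 (fun i (h : _ /\ _) => h.2) A1).
apply: (uf_mono HU2) (uf_and HU2 (uf_and HU2 (hyp_good h2) B1) B2) => i [[[ma na sab hb] c1] c2].
symmetry; apply: (coord_uniq m0 n0 ma na sab hb vn); by apply/eqP.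
Qed.

Lemma flip_ae U (f g : nat -> nat) : nonprincipal_ultrafilter U ->
  uholds U (fun i => f i = g i) -> uholds U (fun i => g i = f i).
Proof. by move=> HU; apply: (uf_mono HU) => i ->. Qed.

Lemma O7_pt U a b v p q : nonprincipal_ultrafilter U -> prop53_hyp m n U a b ->
  uholds U (fun i => uf n (a i) (b i) = v) ->
  (uholds U (fun i => p * beta (a i) (b i) 1 < q * (a i * b i)) <-> p * v < q * n).
Proof.
move=> HU h hv.
rewrite -(uf_const (p * v < q * n) HU).
apply: uf_aeq => //.
apply: (uf_mono HU) (uf_and HU (uf_and HU (hyp_good h) (hyp_large h (p * m))) hv) => i [[[ma na sab hb] pa] ui].
have [e1 e2 kl e3 [ul e4]] := coordL m0 n0 ma na sab hb.
rewrite -ui; apply: O7 => //.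
all: try exact: e3. all: by case: sab => ? ? ?; lia.
Qed.

Lemma core_SR :
  [/\ same_res U1 b1 U2 b2,
      same_res U1 (Mb_beta1 a1 b1) U2 (Mb_beta1 a2 b2),
      same_res U1 (Ma_alpha1 a1 b1) U2 (Ma_alpha1 a2 b2),
      same_res U1 (Ma_alphab a1 b1) U2 (Ma_alphab a2 b2)
    & forall p q : nat,
          uholds U1 (fun i => (p * beta (a1 i) (b1 i) 1 < q * (a1 i * b1 i))%N)
      <-> uholds U2 (fun i => (p * beta (a2 i) (b2 i) 1 < q * (a2 i * b2 i))%N)].
Proof.
have [e11 e12 e13 e14 _] := ae_facts m0 n0 h1.
have [e21 e22 e23 e24 _] := ae_facts m0 n0 h2.
have [v [hv1 hv2]] := SR_u_val.
have SRu := SR_val HU1 HU2 hv1 hv2.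
have SRk : same_res U1 (Mb_beta1 a1 b1) U2 (Mb_beta1 a2 b2).
  apply: (SR_ae HU1 HU2 (flip_ae HU1 e13) (flip_ae HU2 e23)).
  apply: (SR_div HU1 HU2) => //; apply: (SR_add HU1 HU2); last exact: (SR_const HU1 HU2).
  exact: (SR_mul HU1 HU2).
split => //.
- apply: (SR_ae HU1 HU2 (flip_ae HU1 e11) (flip_ae HU2 e21)).
  apply: (SR_div HU1 HU2) => //; apply: (SR_add HU1 HU2); last exact: (SR_const HU1 HU2).
  exact: (SR_mul HU1 HU2).
- apply: (SR_ae HU1 HU2 (flip_ae HU1 e14) (flip_ae HU2 e24)).
  apply: (SR_div HU1 HU2) => //; apply: (SR_add HU1 HU2) => //.
  exact: (SR_mul HU1 HU2).
- apply: (SR_ae HU1 HU2 (flip_ae HU1 e12) (flip_ae HU2 e22)).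
  exact: (SR_div HU1 HU2).
- by move=> p q; rewrite (O7_pt p q HU1 h1 hv1) (O7_pt p q HU2 h2 hv2).
Qed.

End Part2.

Lemma modcop r m n y1 y2 : coprime r m -> y1 < m -> y2 < m ->
  (y1 * r + n) %% m = 0 -> (y2 * r + n) %% m = 0 -> y1 = y2.
Proof.
move=> cop.
wlog le : y1 y2 / y1 <= y2.
  move=> H l1 l2 e1 e2; case: (leqP y1 y2) => h; first exact: H.
  by symmetry; apply: H => //; lia.
move=> l1 l2 e1 e2.
have d : m %| (y2 * r + n) - (y1 * r + n) by rewrite dvdn_sub //; apply/eqP.
have : m %| (y2 - y1) * r.
  by move: d; rewrite mulnBl subnDr.
rewrite Gauss_dvdl; last by rewrite coprime_sym.
case: (posnP (y2 - y1)) => h; first lia.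
move/(dvdn_leq h); lia.
Qed.

Section Cases.
Variables (m n : nat) (U1 U2 : set (set nat)) (a1 b1 a2 b2 : nat -> nat).
Hypotheses (m0 : 0 < m) (n0 : 0 < n).
Hypotheses (h1 : prop53_hyp m n U1 a1 b1) (h2 : prop53_hyp m n U2 a2 b2).
Hypothesis SRa : same_res U1 a1 U2 a2.

Let HU1 := hyp_HU h1.
Let HU2 := hyp_HU h2.

Lemma caseA_one U a b k p q : prop53_hyp m n U a b -> uholds U (fun i => tf m (a i) (b i) = k) ->
  (uholds U (fun i => p * a i < q * b i) <-> (0 < q /\ m * p <= q * k)) /\
  (uholds U (fun i => p * b i < q * alphab (a i) (b i) + q * a i) <-> (p * k < m * q * (k %/ m + 1))).
Proof.
move=> h hk; have HU := hyp_HU h.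
split.
- rewrite -(uf_const (0 < q /\ m * p <= q * k) HU); apply: uf_aeq => //.
  apply: (uf_mono HU) (uf_and HU (uf_and HU (hyp_good h) (hyp_large h (q * n))) hk) => i [[[ma na sab hb] qa] ti].
  have [e1 e2 kl e3 [ul e4]] := coordL m0 n0 ma na sab hb.
  rewrite ti in e1; exact: (O5A p m0 n0 e1 qa).
- rewrite -(uf_const (p * k < m * q * (k %/ m + 1)) HU); apply: uf_aeq => //.
  apply: (uf_mono HU) (uf_and HU (uf_and HU (hyp_good h) (hyp_large h (p * n))) hk) => i [[[ma na sab hb] pa] ti].
  have [e1 e2 kl e3 [ul e4]] := coordL m0 n0 ma na sab hb.
  have ba := ba_t m0 n0 ma na sab hb.
  rewrite ti in e1 ba; exact: (O6A q m0 n0 e1 pa ba).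
Qed.

Lemma caseB_one U a b p q : prop53_hyp m n U a b -> (forall K, uholds U (fun i => K < tf m (a i) (b i))) ->
  (uholds U (fun i => p * a i < q * b i) <-> (0 < q)) /\
  (uholds U (fun i => p * b i < q * alphab (a i) (b i) + q * a i) <-> (0 < q /\ p <= q)).
Proof.
move=> h hk; have HU := hyp_HU h.
split.
- rewrite -(uf_const (0 < q) HU); apply: uf_aeq => //.
  apply: (uf_mono HU) (uf_and HU (hyp_good h) (hk (m * p))) => i [[ma na sab hb] ti].
  have [e1 e2 kl e3 [ul e4]] := coordL m0 n0 ma na sab hb.
  apply: (O5B q m0 e1 ti); lia.
- rewrite -(uf_const (0 < q /\ p <= q) HU); apply: uf_aeq => //.
  apply: (uf_mono HU) (uf_and HU (hyp_good h) (hk (q * m))) => i [[ma na sab hb] ti].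
  have [e1 e2 kl e3 [ul e4]] := coordL m0 n0 ma na sab hb.
  have ba := ba_t m0 n0 ma na sab hb.
  exact: (O6B p m0 e1 na ti ba).
Qed.

Lemma caseB_SRt : (forall K, uholds U1 (fun i => K < tf m (a1 i) (b1 i))) ->
  (forall K, uholds U2 (fun i => K < tf m (a2 i) (b2 i))) ->
  same_res U1 (Ma_alphab a1 b1) U2 (Ma_alphab a2 b2) ->
  same_res U1 (fun i => tf m (a1 i) (b1 i)) U2 (fun i => tf m (a2 i) (b2 i)).
Proof.
move=> _ _ SRab.
have [_ e12 _ _ _] := ae_facts m0 n0 h1.
have [_ e22 _ _ _] := ae_facts m0 n0 h2.
have SRd : same_res U1 (fun i => tf m (a1 i) (b1 i) %/ m) U2 (fun i => tf m (a2 i) (b2 i) %/ m).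
  exact: (SR_ae HU1 HU2 e12 e22).
have SRr : same_res U1 (fun i => tf m (a1 i) (b1 i) %% m) U2 (fun i => tf m (a2 i) (b2 i) %% m).
  have [r [[rm hr] cop]] : exists r, ures U1 a1 m r /\ coprime r m by case: h1.
  have hr2 := SR_fwd HU1 SRa m0 hr.
  have [y1 [y1m hy1]] := uf_lim HU1 (uf_T HU1 (P := fun i => tf m (a1 i) (b1 i) %% m < m) (fun i => ltn_pmod _ m0)).
  have [y2 [y2m hy2]] := uf_lim HU2 (uf_T HU2 (P := fun i => tf m (a2 i) (b2 i) %% m < m) (fun i => ltn_pmod _ m0)).
  have key : forall U a b y, prop53_hyp m n U a b -> uholds U (fun i => a i %% m = r) ->
      uholds U (fun i => tf m (a i) (b i) %% m = y) -> (y * r + n) %% m = 0.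
    move=> U a b y h hr' hy; have HU := hyp_HU h.
    have [i [[[ma na sab hb] ai] ti]] := uf_ex HU (uf_and HU (uf_and HU (hyp_good h) hr') hy).
    have [e1 e2 kl e3 [ul e4]] := coordL m0 n0 ma na sab hb.
    have : (m * b i) %% m = 0 by rewrite modnMr.
    by rewrite e1 -modnDml -modnMm ai ti modnDml.
  have yy : y1 = y2 := modcop cop y1m y2m (key _ _ _ _ h1 hr hy1) (key _ _ _ _ h2 hr2 hy2).
  subst y2; exact: (SR_val HU1 HU2 hy1 hy2).
have SRt := SR_add HU1 HU2 (SR_mul HU1 HU2 SRd (SR_const HU1 HU2 m)) SRr.
apply: (SR_ae HU1 HU2 _ _ SRt).
- by apply: (uf_T HU1) => i /=; rewrite -divn_eq.
- by apply: (uf_T HU2) => i /=; rewrite -divn_eq.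
Qed.

End Cases.

Lemma finish (m n : nat) U1 a1 b1 U2 a2 b2 : (0 < m)%N -> (0 < n)%N ->
  prop53_hyp m n U1 a1 b1 -> prop53_hyp m n U2 a2 b2 -> same_res U1 a1 U2 a2 ->
  same_res U1 (fun i => tf m (a1 i) (b1 i)) U2 (fun i => tf m (a2 i) (b2 i)) ->
  (forall p q : nat, uholds U1 (fun i => (p * a1 i < q * b1 i)%N)
                     <-> uholds U2 (fun i => (p * a2 i < q * b2 i)%N)) ->
  (forall p q : nat,
          uholds U1 (fun i => (p * b1 i < q * alphab (a1 i) (b1 i) + q * a1 i)%N)
      <-> uholds U2 (fun i => (p * b2 i < q * alphab (a2 i) (b2 i) + q * a2 i)%N)) ->
  same_invariants U1 a1 b1 U2 a2 b2.
Proof.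
move=> m0 n0 h1 h2 SRa SRt o5 o6.
have [sb sk sa1 sab o7] := core_SR m0 n0 h1 h2 SRa SRt.
by do 4 (split => //).
Qed.

Unset Implicit Arguments. Set Strict Implicit.

Theorem proposition5p3 (R : realType) (m n : nat) :
  (1 <= m)%N -> (1 <= n)%N ->
  (forall (U : set (set nat)) (a b : nat -> nat),
      prop53_hyp m n U a b ->
      q0 R U a b = 0%R \/
      exists k : nat, (0 < k)%N /\ q0 R U a b = (m%:R / k%:R)%R) /\
  (forall (U1 : set (set nat)) (a1 b1 : nat -> nat)
          (U2 : set (set nat)) (a2 b2 : nat -> nat),
      prop53_hyp m n U1 a1 b1 ->
      prop53_hyp m n U2 a2 b2 ->
      same_res U1 a1 U2 a2 ->
      q0 R U1 a1 b1 = q0 R U2 a2 b2 ->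
      (q0 R U1 a1 b1 = 0%R -> same_res U1 (Ma_alphab a1 b1) U2 (Ma_alphab a2 b2)) ->
      same_invariants U1 a1 b1 U2 a2 b2).
Proof.
move=> m0 n0; split.
  move=> U a b h.
  case: (classify R m0 n0 h) => [[k [k0 [_ e]]] | [_ e]]; [right; exists k | left]; by [].
move=> U1 a1 b1 U2 a2 b2 h1 h2 SRa eq hB.
have HU1 := hyp_HU h1; have HU2 := hyp_HU h2.
have mR : (m%:R : R)%R != 0%R by rewrite pnatr_eq0 -lt0n.
have nz : forall k, (0 < k)%N -> ((m%:R / k%:R)%R : R) != 0%R.
  by move=> k k0; rewrite mulf_eq0 invr_eq0 !pnatr_eq0 negb_or -!lt0n m0 k0.
case: (classify R m0 n0 h1) => [[k1 [k10 [hk1 e1]]] | [hi1 e1]];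
case: (classify R m0 n0 h2) => [[k2 [k20 [hk2 e2]]] | [hi2 e2]].
- have kk : k1 = k2.
    move: eq; rewrite e1 e2 => /(mulfI mR) /invr_inj /eqP.
    by rewrite eqr_nat => /eqP.
  subst k2.
  apply: (@finish m n U1 a1 b1 U2 a2 b2 m0 n0 h1 h2 SRa).
  + exact: (SR_val HU1 HU2 hk1 hk2).
  + move=> p q.
    by rewrite (caseA_one m0 n0 p q h1 hk1).1 (caseA_one m0 n0 p q h2 hk2).1.
  + move=> p q.
    by rewrite (caseA_one m0 n0 p q h1 hk1).2 (caseA_one m0 n0 p q h2 hk2).2.
- by move: eq; rewrite e1 e2 => /eqP; rewrite (negbTE (nz _ k10)).
- by move: eq; rewrite e1 e2 => /eqP; rewrite eq_sym (negbTE (nz _ k20)).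
- apply: (@finish m n U1 a1 b1 U2 a2 b2 m0 n0 h1 h2 SRa).
  + exact: (caseB_SRt m0 n0 h1 h2 SRa hi1 hi2 (hB e1)).
  + move=> p q.
    by rewrite (caseB_one m0 n0 p q h1 hi1).1 (caseB_one m0 n0 p q h2 hi2).1.
  + move=> p q.
    by rewrite (caseB_one m0 n0 p q h1 hi1).2 (caseB_one m0 n0 p q h2 hi2).2.
Qed.
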